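(* Let $P$ be a classifier on $\mathbb{R}^n$ and $x \in \mathbb{R}^n$ such that the coverage of $P$ at $x$ is infinite. Then $P(x)$ contains an open halfspace $H$ with $x \in \mathrm{bd}(H)$.
   Context: A classifier is a partition $P$ of $\mathbb{R}^n$ together with a distinguished member $R \in P$, the refinement set, which may be empty and which is both meagre and Lebesgue null; the label set is $L_P = P \setminus\{R\}$. For $x \in \mathbb{R}^n$, $P(x)$ denotes the member of $P$ containing $x$. An anchor for $x$ is an open ball $A = B(c,r)$ with $x \in A \subseteq P(x)$, and its coverage is its radius $r$. The coverage of $P$ at $x$ is infinite if there exists a sequence of anchors for $x$ whose radii are unbounded. $\mathrm{bd}(X)$ denotes the topological boundary of $X$. *)

(* Defs.v *)
(* R^n is modelled as 'rV[R]_n, R : realType.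
   Its library topology (sup-norm) coincides with the Euclidean topology, so
   closure / interior / nowhere dense / meagre are the usual ones; balls,
   halfspaces and Lebesgue-null sets are defined explicitly (Euclidean). *)
From HB Require Import structures.
From mathcomp Require Import all_boot all_order all_algebra.
From mathcomp Require Import all_classical all_reals all_analysis.
Set Implicit Arguments. Unset Strict Implicit. Unset Printing Implicit Defensive.
Import Order.TTheory GRing.Theory Num.Theory.
Import numFieldNormedType.Exports.
Local Open Scope classical_set_scope.
Local Open Scope ring_scope.

Section Defs.
Variables (R : realType) (n : nat).
Local Notation V := 'rV[R]_n.

Definition dotp (u v : V) : R := \sum_(i < n) u ord0 i * v ord0 i.
Definition eball (c : V) (r : R) : set V :=
  [set y | dotp (y - c) (y - c) < r ^+ 2 /\ 0 < r].

Definition bd (X : set V) : set V := closure X `\` interior X.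

Definition open_halfspace (H : set V) : Prop :=
  exists (a : V) (b : R), a != 0 /\ H = [set y | b < dotp a y].

Definition nowhere_dense (S : set V) : Prop := interior (closure S) = set0.
Definition meagre (S : set V) : Prop :=
  exists F : nat -> set V, (forall k, nowhere_dense (F k)) /\
    S `<=` \bigcup_k F k.

Definition box (a b : V) : set V :=
  [set y | forall i, a ord0 i <= y ord0 i <= b ord0 i].
Definition lebesgue_null (S : set V) : Prop :=
  forall eps : R, 0 < eps -> exists a b : nat -> V,
    (forall k i, a k ord0 i <= b k ord0 i) /\
    S `<=` \bigcup_k box (a k) (b k) /\
    (forall N, \sum_(k < N) \prod_(i < n) (b k ord0 i - a k ord0 i) <= eps).

Definition classifier (P : set (set V)) (Rf : set V) : Prop :=
  P Rf /\
  (forall A, P A -> A <> Rf -> A !=set0) /\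
  (forall x : V, exists A, P A /\ A x) /\
  (forall A B, P A -> P B -> A <> B -> A `&` B = set0) /\
  meagre Rf /\ lebesgue_null Rf.

(* A is the member P(x) of P containing x; anchors for x *)
Definition anchor (A : set V) (x c : V) (r : R) : Prop :=
  eball c r x /\ eball c r `<=` A.

Definition infinite_coverage (P : set (set V)) (x : V) : Prop :=
  exists (A : set V) (c : nat -> V) (r : nat -> R),
    P A /\ A x /\ (forall k, anchor A x (c k) (r k)) /\
    (forall M : R, exists k, M < r k).

End Defs.

(* Main.v *)
Require Import Defs.
From HB Require Import structures.
From mathcomp Require Import all_boot all_order all_algebra.
From mathcomp Require Import all_classical all_reals all_analysis.
From mathcomp Require Import ring lra.
Import Order.TTheory GRing.Theory Num.Theory.
Import numFieldNormedType.Exports.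
Local Open Scope classical_set_scope.
Local Open Scope ring_scope.

Set Implicit Arguments. Unset Strict Implicit.
Section H.
Context {R : realType} {n : nat}.
Implicit Types (u v w : 'rV[R]_n).

Lemma dotpC u v : dotp u v = dotp v u.
Proof. by apply: eq_bigr => i _; rewrite mulrC. Qed.
Lemma dotpDl u v w : dotp (u + v) w = dotp u w + dotp v w.
Proof. by rewrite /dotp -big_split; apply: eq_bigr => i _; rewrite mxE mulrDl. Qed.
Lemma dotpNl u w : dotp (- u) w = - dotp u w.
Proof. by rewrite /dotp -sumrN; apply: eq_bigr => i _; rewrite mxE mulNr. Qed.
Lemma dotpZl (a : R) u w : dotp (a *: u) w = a * dotp u w.
Proof. by rewrite /dotp mulr_sumr; apply: eq_bigr => i _; rewrite mxE mulrA. Qed.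
Lemma dotpBl u v w : dotp (u - v) w = dotp u w - dotp v w.
Proof. by rewrite dotpDl dotpNl. Qed.
Lemma dotpBr u v w : dotp w (u - v) = dotp w u - dotp w v.
Proof. by rewrite dotpC dotpBl !(dotpC w). Qed.
Lemma dotpZr (a : R) u w : dotp w (a *: u) = a * dotp w u.
Proof. by rewrite dotpC dotpZl dotpC. Qed.
Lemma dotp_sq u v : dotp (u - v) (u - v) = dotp u u - 2 * dotp u v + dotp v v.
Proof. rewrite !dotpBl !dotpBr (dotpC v u); lra. Qed.
Lemma dotp_ge0 u : 0 <= dotp u u.
Proof. by apply: sumr_ge0 => i _; rewrite -expr2 sqr_ge0. Qed.
Lemma dotp_ge_coord u i : u ord0 i ^+ 2 <= dotp u u.
Proof.
rewrite /dotp (bigD1 i) //= -expr2 lerDl; apply: sumr_ge0 => j _.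
by rewrite -expr2 sqr_ge0.
Qed.
Lemma dotp_bound v w (e : R) : (forall i, `|w ord0 i| <= e) ->
  `|dotp v w| <= (\sum_(i < n) `|v ord0 i|) * e.
Proof.
move=> he; rewrite mulr_suml; apply: le_trans (ler_norm_sum _ _ _) _.
apply: ler_sum => i _; rewrite normrM; apply: ler_wpM2l => //.
Qed.
Lemma dotpNN u : dotp (- u) (- u) = dotp u u.
Proof. by rewrite dotpNl dotpC dotpNl opprK. Qed.
End H.
Lemma null_n0 (R : realType) (S : set 'rV[R]_0) : lebesgue_null S -> False.
Proof.
move=> /(_ 1 ltr01) [a [b [_ [_ /(_ 2%N)]]]].
rewrite big_ord_recr big_ord_recr big_ord0 /= !big_ord0; lra.
Qed.

Lemma dotp_gt0 (R : realType) n (a : 'rV[R]_n) : a != 0 -> 0 < dotp a a.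
Proof.
move=> a0.
have [i ai] : exists i, a ord0 i != 0.
  have /existsP[i ai] : [exists i, a ord0 i != 0]; last by exists i.
  apply: contraNT a0 => /existsPn h; apply/eqP/rowP => i.
  by rewrite mxE; apply/eqP/negPn/h.
apply: (lt_le_trans _ (dotp_ge_coord a i)); by rewrite exprn_even_gt0.
Qed.

Lemma bd_half (R : realType) n (a x : 'rV[R]_n) : a != 0 ->
  bd [set y | dotp a x < dotp a y] x.
Proof.
move=> a0; split; last first.
  by move=> /interior_subset /=; rewrite ltxx.
move=> B /nbhs_ballP [e e0 eB].
have na : 0 <= `|a| by [].
pose t := e / (2 * (`|a| + 1)).
have t0 : 0 < t by rewrite /t divr_gt0 // mulr_gt0 // ltr_pwDr.
exists (x + t *: a); split => /=.
  rewrite (dotpC a (x + _)) dotpDl dotpZl (dotpC x) ltrDl mulr_gt0 // dotp_gt0 //.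
apply: eB; rewrite -ball_normE /ball_ /= opprD addrA subrr add0r normrN normrZ.
rewrite gtr0_norm // /t.
have h : `|a| < 2 * (`|a| + 1) by lra.
rewrite mulrAC ltr_pdivrMr ?mulr_gt0 ?ltr_pwDr // ltr_pM2l //.
Qed.
Lemma cluster_seq (R : realType) n (u : nat -> 'rV[R]_n) (r : nat -> R) :
  (forall k i, `|u k ord0 i| <= 1) -> (forall M, exists k, M < r k) ->
  exists p : 'rV[R]_n, forall M eps, 0 < eps ->
    exists k, M < r k /\ forall i, `|p ord0 i - u k ord0 i| < eps.
Proof.
move=> ub unb.
pose G := filter_from setT (fun M : R => [set k | M < r k]).
have FG : ProperFilter G.
  apply: filter_from_proper.
    apply: filter_fromT_filter; first by exists 0.
    move=> i j; exists (Num.max i j) => k /=; rewrite gt_max => /andP[] //.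
  by move=> i _; have [k hk] := unb i; exists k.
pose K := [set v : 'rV[R]_n | forall i, `[-1, 1]%classic (v ord0 i)].
have cK : compact K.
  have := @rV_compact R n (fun=> `[-1, 1]%classic).
  apply; move=> _; exact: segment_compact.
have [p [_ cp]] : K `&` cluster (u @ G) !=set0.
  apply: cK.
  exists 0 => // k _ i /=; rewrite in_itv /= -ler_norml; exact: ub.
exists p => M eps e0.
have [] := cp [set v | exists k, M < r k /\ v = u k] (ball p eps) _ (nbhsx_ballx p eps e0).
  by exists M => // k hk; exists k.
move=> v [[k [hk ->]] [_ hb]]; exists k; split => // i.
by have := hb ord0 i.
Qed.
Unset Implicit Arguments. Set Strict Implicit.
Theorem lemma2 (R : realType) (n : nat) (P : set (set 'rV[R]_n))
  (Rf : set 'rV[R]_n) (x : 'rV[R]_n) :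
  classifier P Rf -> infinite_coverage P x ->
  forall A : set 'rV[R]_n, P A -> A x ->
  exists H : set 'rV[R]_n, open_halfspace H /\ H `<=` A /\ bd H x.
Proof.
move=> [PRf [_ [_ [disj [_ nullRf]]]]] [A0 [c [r [PA0 [A0x [anch unb]]]]]] A PA Ax.
have -> : A = A0.
  case: (pselect (A = A0)) => // neq.
  have : (A `&` A0) x by [].
  by rewrite (disj _ _ PA PA0 neq).
have n0 : (0 < n)%N.
  by destruct n; [exfalso; exact: null_n0 nullRf | done].
have r0 : forall k, 0 < r k by move=> k; have [[_ ->] _] := anch k.
pose u k := (r k)^-1 *: (c k - x).
have dk : forall k, c k - x = r k *: u k.
  by move=> k; rewrite scalerA mulfV ?gt_eqF // scale1r.
have ddlt : forall k, r k ^+ 2 * dotp (u k) (u k) < r k ^+ 2.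
  move=> k; have [[hd _] _] := anch k.
  by rewrite -opprB dotpNN dk dotpZl dotpZr mulrA -expr2 in hd.
have ub : forall k i, `|u k ord0 i| <= 1.
  move=> k i; have [[hd _] _] := anch k.
  rewrite -opprB dotpNN in hd.
  have hdi := dotp_ge_coord (c k - x) i.
  rewrite /u [X in `|X|]mxE normrM normfV (gtr0_norm (r0 k)) mulrC ler_pdivrMr ?r0 // mul1r.
  move: hdi; set d := (c k - x) ord0 i => hdi.
  have := r0 k.
  move=> rk0; rewrite ler_norml; apply/andP; split; nra.
clearbody u.
have core : forall y k, dotp (y - c k) (y - c k) =
    dotp (y - x) (y - x) - 2 * r k * dotp (y - x) (u k)
    + r k ^+ 2 * dotp (u k) (u k).
  move=> y k; have -> : y - c k = (y - x) - r k *: u k.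
    by rewrite -dk opprB addrA subrK.
  rewrite dotp_sq dotpZr dotpZl dotpZr; ring.
have inA0 : forall y k, dotp (y - c k) (y - c k) < r k ^+ 2 -> A0 y.
  by move=> y k h; have [_ sub] := anch k; apply: sub; split.
have [p hp] := cluster_seq ub unb.
have [pz|pnz] := eqVneq p 0.
  (* all of R^n is in A0 *)
  pose a : 'rV[R]_n := const_mx 1.
  have anz : a != 0.
    apply/negP => /eqP /rowP /(_ (Ordinal n0)); rewrite !mxE => /eqP.
    by rewrite oner_eq0.
  exists [set y | dotp a x < dotp a y]; split; first by exists a, (dotp a x); split.
  split; last exact: bd_half.
  move=> y _.
  set Y := y - x; set s := \sum_(i < n) `|Y ord0 i|.
  have s0 : 0 <= s by apply: sumr_ge0.
  set eps := 1 / (4 * (s + n%:R + 1)).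
  have D0 : 0 < 4 * (s + n%:R + 1).
    have : 0 <= n%:R :> R by []. lra.
  have e0 : 0 < eps by rewrite /eps divr_gt0.
  have e1 : eps * (4 * (s + n%:R + 1)) = 1.
    by rewrite /eps mul1r mulVf // gt_eqF.
  have [k [hk hu]] := hp (2 * (dotp Y Y + 1)) eps e0.
  have hu' : forall i, `|u k ord0 i| <= eps.
    by move=> i; have := hu i; rewrite pz mxE sub0r normrN => /ltW.
  have q1 : `|dotp Y (u k)| <= s * eps by exact: dotp_bound.
  have su : \sum_(i < n) `|u k ord0 i| <= n%:R * eps.
    apply: le_trans (ler_sum _ (fun i _ => hu' i)) _.
    by rewrite sumr_const card_ord mulr_natl.
  have q2 : `|dotp (u k) (u k)| <= (\sum_(i < n) `|u k ord0 i|) * eps.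
    exact: dotp_bound.
  have n00 : 0 <= n%:R :> R by [].
  have q3 : dotp (u k) (u k) <= 1 / 16.
    have := ler_norm (dotp (u k) (u k)); nra.
  have q4 : - (1 / 4) <= dotp Y (u k).
    move: q1; rewrite ler_norml => /andP[q1 _]; nra.
  have YY0 : 0 <= dotp Y Y by exact: dotp_ge0.
  apply: (inA0 y k); rewrite core -/Y.
  have := r0 k; nra.
exists [set y | dotp p x < dotp p y]; split; first by exists p, (dotp p x); split.
split; last exact: bd_half.
move=> y /= hy.
set Y := y - x; set s := \sum_(i < n) `|Y ord0 i|.
have s0 : 0 <= s by apply: sumr_ge0.
set t := dotp Y p.
have t0 : 0 < t by rewrite /t dotpC dotpBr subr_gt0.
set eps := t / (2 * (s + 1)).
have D0 : 0 < 2 * (s + 1) by lra.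
have e0 : 0 < eps by rewrite /eps divr_gt0.
have e1 : eps * (2 * (s + 1)) = t.
  by rewrite /eps -mulrA mulVf ?mulr1 // gt_eqF.
set M := dotp Y Y / t.
have M1 : M * t = dotp Y Y by rewrite /M -mulrA mulVf ?mulr1 // gt_eqF.
have [k [hk hu]] := hp M eps e0.
have q1 : `|dotp Y (p - u k)| <= s * eps.
  by apply: dotp_bound => i; rewrite !mxE; apply: ltW.
have q4 : t / 2 <= dotp Y (u k).
  move: q1; rewrite dotpBr -/t ler_norml => /andP[_ q1]; nra.
have YY0 : 0 <= dotp Y Y by exact: dotp_ge0.
apply: (inA0 y k); rewrite core -/Y.
have := r0 k; have := ddlt k; nra.
Qed.
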